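(* Let $f:\mathcal D\subset\Omega\times(0,\infty)\to\Omega\times(0,\infty)$ be a measure-preserving embedding, and suppose there is $W\in\mathcal C^1_\psi(\Omega\times(0,\infty))$ and constants $\beta,\delta>0$ with $0<\beta\le\partial_rW(\omega,r)\le\delta$ for all $(\omega,r)\in\Omega\times(0,\infty)$ and $W(f(\omega,r))\le W(\omega,r)+k(r)$ for all $(\omega,r)\in\mathcal D$, where $k:(0,\infty)\to\mathbb R$ is decreasing, bounded, with $\lim_{r\to\infty}k(r)=0$. Let $(\epsilon_j)_{j\in\mathbb N}$, $(W_j)_{j\in\mathbb N}$ be sequences of positive numbers with $\sum_j\epsilon_j<\infty$, $\lim_{j\to\infty}W_j=\infty$ and $\lim_{j\to\infty}\epsilon_j^{-1}k\big(\tfrac{1}{4\delta}W_j\big)=0$. Put $$\mathcal A=\bigcup_{j\in\mathbb N}\mathcal A_j,\qquad \mathcal A_j=\{(\omega,r)\in\Omega\times(0,\infty):|W(\omega,r)-W_j|\le\epsilon_j\}.$$ Then $(\mu_\Omega\otimes\lambda)(\mathcal A)<\infty$, and for every $(\omega_0,r_0)\in\mathcal U$ there is $K\in\mathbb N$ with $(\omega_K,r_K)=f^K(\omega_0,r_0)\in\mathcal A$.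
   Context: $\Omega$ is a commutative (written additively), compact, metrizable topological group, and $\psi:\mathbb R\to\Omega$ is a continuous group homomorphism with $\psi(\mathbb R)$ dense. $\mu_\Omega$ is the Haar probability measure of $\Omega$ and $\lambda$ Lebesgue measure on $\mathbb R$. For $U:\Omega\to\mathbb R$, $\partial_\psi U(\omega)=\lim_{t\to0}\frac{U(\omega+\psi(t))-U(\omega)}{t}$; $\mathcal C^1_\psi(\Omega)$ is the space of continuous $U$ with $\partial_\psi U$ existing everywhere and continuous; $\mathcal C^1_\psi(\Omega\times(0,\infty))$ is the set of $W(\omega,r)$ with $W(\cdot,r)\in\mathcal C^1_\psi(\Omega)$ for all $r$ and $W(\omega,\cdot)\in\mathcal C^1(0,\infty)$ for all $\omega$. A measure-preserving embedding is a continuous injective map $f:\mathcal D\to\Omega\times(0,\infty)$, $\mathcal D\subset\Omega\times(0,\infty)$ open, with $(\mu_\Omega\otimes\lambda)(f(\mathcal B))=(\mu_\Omega\otimes\lambda)(\mathcal B)$ for Borel $\mathcal B\subset\mathcal D$. Set $\mathcal D_1=\mathcal D$, $\mathcal D_{n+1}=f^{-1}(\mathcal D_n)$, $\mathcal D_\infty=\bigcap_n\mathcal D_n$; for $(\omega_0,r_0)\in\mathcal D_\infty$ write $(\omega_n,r_n)=f^n(\omega_0,r_0)$, and $\mathcal U=\{(\omega_0,r_0)\in\mathcal D_\infty:\limsup_{n\to\infty}r_n=\infty\}$. *)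

(* Defs.v *)
From HB Require Import structures.
From mathcomp Require Import all_boot all_order all_algebra.
From mathcomp Require Import all_classical all_reals all_analysis.
Set Implicit Arguments. Unset Strict Implicit. Unset Printing Implicit Defensive.
Import Order.TTheory GRing.Theory Num.Theory.
Import numFieldNormedType.Exports.
Local Open Scope classical_set_scope.
Local Open Scope ring_scope.

Definition metrizable_space {R : realType} (T : topologicalType) :=
  exists d : T -> T -> R,
    [/\ (forall x y, 0 <= d x y),
        (forall x y, d x y = 0 <-> x = y),
        (forall x y, d x y = d y x),
        (forall x y z, d x z <= d x y + d y z) &
        (forall x, nbhs x = [set A | exists2 e : R, 0 < e & [set y | d x y < e] `<=` A])].

Definition ptZ (T : topologicalZmodType) : Type := T.
HB.instance Definition _ (T : topologicalZmodType) := Choice.on (ptZ T).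
HB.instance Definition _ (T : topologicalZmodType) :=
  isPointed.Build (ptZ T) (0 : T).
Definition open_ptZ (T : topologicalZmodType) : set (set (ptZ T)) := @open T.
Arguments open_ptZ : clear implicits.
Notation borelT X := (g_sigma_algebraType (open_ptZ X)).

Definition psi_deriv {R : realType} {Om : topologicalZmodType}
  (psi : R -> Om) (U : Om -> R) (w : Om) (l : R) : Prop :=
  (fun t : R => (U (w + psi t) - U w) / t) @ 0^' --> l.

Definition C1psi {R : realType} {Om : topologicalZmodType}
  (psi : R -> Om) (U : Om -> R) : Prop :=
  continuous U /\
  exists dU : Om -> R, (forall w, psi_deriv psi U w (dU w)) /\ continuous dU.

Definition C1pos {R : realType} (g : R -> R) : Prop :=
  (forall r, 0 < r -> derivable g r 1) /\
  {in `]0, +oo[, continuous (derive1 g)}.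

Definition C1psi_prod {R : realType} {Om : topologicalZmodType}
  (psi : R -> Om) (W : Om * R -> R) : Prop :=
  (forall r, 0 < r -> C1psi psi (fun w => W (w, r))) /\
  (forall w, C1pos (fun r => W (w, r))).

Definition Dinf {T : Type} (f : T -> T) (D : set T) : set T :=
  [set p | forall n, D (iter n f p)].

Definition Uset {R : realType} {Om : Type} (f : Om * R -> Om * R)
  (D : set (Om * R)) : set (Om * R) :=
  [set p | Dinf f D p /\ limn_esup (fun n => ((iter n f p).2)%:E) = +oo%E].

(* Main.v *)
Require Import Defs.
From HB Require Import structures.
From mathcomp Require Import all_boot all_order all_algebra.
From mathcomp Require Import all_classical all_reals all_analysis.
From mathcomp Require Import ring lra measurable_realfun.
Import Order.TTheory GRing.Theory Num.Theory.
Import numFieldNormedType.Exports.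
Import HBNNSimple.
Local Open Scope classical_set_scope.
Local Open Scope ring_scope.

Lemma mvt_bounds (R : realType) (g : R -> R) (beta delta : R) :
  (forall r, 0 < r -> derivable g r 1) ->
  (forall r, 0 < r -> beta <= derive1 g r <= delta) ->
  forall a b, 0 < a -> a <= b ->
  beta * (b - a) <= g b - g a <= delta * (b - a).
Proof.
move=> gd gb a b a0; rewrite le_eqVlt => /predU1P[<-|ab].
  by rewrite !subrr !mulr0 lexx.
have [c cab ->] : exists2 c, c \in `]a, b[ & g b - g a = derive1 g c * (b - a).
  apply: MVT => //.
    move=> x; rewrite in_itv /= => /andP[ax _].
    rewrite derive1E; apply: derivableP; apply: gd; exact: lt_trans ax.
  apply: derivable_within_continuous => x; rewrite in_itv /= => /andP[ax _].
  by apply: gd; exact: lt_le_trans ax.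
move: cab; rewrite in_itv /= => /andP[ac _].
have /andP[h1 h2] := gb c (lt_trans a0 ac).
have ba : 0 <= b - a by rewrite subr_ge0 ltW.
by rewrite !ler_wpM2r.
Qed.

Lemma nnsfun_ge0' d (T : measurableType d) (R : realType)
  (h : {nnsfun T >-> R}) x : 0 <= h x.
Proof. exact: fun_ge0. Qed.

Lemma esup_bounded (R : realType) (u : nat -> R) (X : R) :
  (forall n, u n <= X) -> (limn_esup (fun n => (u n)%:E) <= X%:E)%E.
Proof.
move=> uX; rewrite limn_esup_lim; apply: lime_le; first exact: is_cvg_esups.
apply: nearW => m; apply: ge_ereal_sup => _ [n _ <-]; by rewrite lee_fin.
Qed.

Theorem lemma4p3 (R : realType) (Om : topologicalZmodType)
  (Om_compact : compact [set: Om]) (Om_metr : @metrizable_space R Om)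
  (psi : {additive R -> Om}) (psi_cont : continuous psi)
  (psi_dense : closure (range psi) = [set: Om])
  (mu : probability (borelT Om) R)
  (mu_haar : forall (A : set (borelT Om)) (x : Om), measurable A ->
     mu [set x + y | y in A] = mu A)
  (D : set (Om * R)) (D_open : open D) (D_pos : D `<=` [set p | 0 < p.2])
  (f : Om * R -> Om * R)
  (f_cont : {within D, continuous f}) (f_inj : {in D &, injective f})
  (f_pos : forall p, D p -> 0 < (f p).2)
  (f_mp : forall B : set (borelT Om * R)%type, measurable B -> B `<=` D ->
     (mu \x lebesgue_measure)%E (f @` B) = (mu \x lebesgue_measure)%E B)
  (W : Om * R -> R) (W_C1 : C1psi_prod psi W)
  (beta delta : R) (beta_pos : 0 < beta) (delta_pos : 0 < delta)
  (dW_bounds : forall w r, 0 < r ->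
     beta <= derive1 (fun s => W (w, s)) r <= delta)
  (k : R -> R)
  (k_decr : {in `]0, +oo[ &, {homo k : x y /~ x <= y}})
  (k_bdd : exists M : R, forall r, 0 < r -> `|k r| <= M)
  (k_lim : k x @[x --> +oo] --> 0)
  (W_f : forall p, D p -> W (f p) <= W p + k p.2)
  (eps Wj : nat -> R) (eps_pos : forall j, 0 < eps j) (Wj_pos : forall j, 0 < Wj j)
  (eps_sum : (\sum_(0 <= j <oo) (eps j)%:E < +oo)%E)
  (Wj_lim : Wj @ \oo --> +oo)
  (ek_lim : (fun j => (eps j)^-1 * k (Wj j / (4 * delta))) @ \oo --> 0) :
  let A := \bigcup_j [set p : Om * R | 0 < p.2 /\ `|W p - Wj j| <= eps j] in
  ((mu \x lebesgue_measure)%E A < +oo)%E /\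
  (forall p, Uset f D p -> exists K : nat, A (iter K f p)).
Proof.
move=> A.
have Wd : forall w r, 0 < r -> derivable (fun s => W (w, s)) r 1.
  by move=> w r r0; exact: (W_C1.2 w).1 r r0.
have Wmvt : forall w a b, 0 < a -> a <= b ->
    beta * (b - a) <= W (w, b) - W (w, a) <= delta * (b - a).
  by move=> w; apply: mvt_bounds => // r r0; [exact: Wd | exact: dW_bounds].
have [C C0 HC] : exists2 C, 0 <= C & forall w, `|W (w, 1)| <= C.
  have cW1 : continuous (fun w : Om => W (w, 1)) by exact: ((W_C1.1 1 ltr01).1).
  have cpt := continuous_compact (@continuous_subspaceT _ _ setT _ cW1) Om_compact.
  have /compact_bounded/pinfty_ex_gt0[M M0 HM] := cpt.
  by exists M; [exact: ltW | move=> w; apply: HM; exists w].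
have Wup : forall q : Om * R, 0 < q.2 -> W q <= C + delta * q.2.
  case=> w r /= r0; have := HC w; rewrite ler_norml => /andP[_ h1].
  case: (leP 1 r) => r1.
    have /andP[_ h] := Wmvt w 1 r ltr01 r1; nra.
  have /andP[h _] := Wmvt w r 1 r0 (ltW r1); nra.
have Wlow : forall q : Om * R, 1 <= q.2 -> - C + beta * (q.2 - 1) <= W q.
  case=> w r /= r1; have := HC w; rewrite ler_norml => /andP[h1 _].
  have /andP[h _] := Wmvt w 1 r ltr01 r1; nra.
split.
  pose T := (\sum_(j <oo) ((4 / beta) * eps j)%:E)%E.
  have Tfin : (T < +oo)%E.
    rewrite /T (eq_eseriesr (fun j _ => EFinM (4 / beta) (eps j))).
    rewrite nneseriesZl; last by move=> i _; rewrite lee_fin ltW.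
    by apply: lte_mul_pinfty => //; rewrite lee_fin divr_ge0 // ltW.
  have sec : forall w, (lebesgue_measure (xsection A w) <= T)%E.
    move=> w.
    pose S j := [set r : R | 0 < r /\ `|W (w, r) - Wj j| <= eps j].
    have xsecE : xsection A w = \bigcup_j S j.
      by apply/funext => r; rewrite /xsection /= in_setE.
    have cg : {in `]0, +oo[%classic, continuous (fun s => W (w, s))}.
      move=> r; rewrite in_setE /= in_itv /= andbT => r0.
      exact/differentiable_continuous/derivable1_diffP/Wd.
    have mg := open_continuous_measurable_fun (@rray_open _ R 0) cg.
    have mS j : measurable (S j).
      have := mg (measurable_itv _) _ (measurable_itv `[Wj j - eps j, Wj j + eps j]).
      congr measurable; apply/funext => r /=; rewrite !in_itv /= andbT.
      apply/propext; split => -[r0 hr]; split => //.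
        by move: hr => /andP[h1 h2]; rewrite ler_norml; apply/andP; split; lra.
      by move: hr; rewrite ler_norml => /andP[h1 h2]; apply/andP; split; lra.
    have mA : measurable (xsection A w) by rewrite xsecE; exact: bigcupT_measurable.
    have h : (lebesgue_measure (xsection A w) <= \sum_(n <oo) lebesgue_measure (S n))%E.
      move: (measure_sigma_subadditive lebesgue_measure mS mA).
      rewrite /subset_sigma_subadditive; apply; by rewrite xsecE.
    apply: le_trans h _.
    apply: lee_nneseries => [i _ _|j _]; first exact: measure_ge0.
    have [[r0 Sr0]|S0] := pselect (exists r, S j r); last first.
      have -> : S j = set0 by apply/funext => r; apply/propext; split => // Sr; apply: S0; exists r.
      by rewrite measure0 lee_fin mulr_ge0 // ?divr_ge0 // ltW.
    pose c := 2 * eps j / beta.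
    have hc : beta * c = 2 * eps j by rewrite /c mulrC divfK // gt_eqF.
    have c0 : 0 < c by rewrite /c divr_gt0 // mulr_gt0.
    have sub : S j `<=` `[r0 - c, r0 + c]%classic.
      move=> r [r1 hr]; case: Sr0 => [r00 hr0].
      move: hr hr0; rewrite !ler_norml => /andP[a1 a2] /andP[b1 b2].
      rewrite /= in_itv /=; apply/andP; split.
        case: (leP r0 r) => rr; first lra.
        have /andP[h _] := Wmvt w r r0 r1 (ltW rr); nra.
      case: (leP r r0) => rr; first lra.
      have /andP[h _] := Wmvt w r0 r r00 (ltW rr); nra.
    have mI : measurable (`[r0 - c, r0 + c]%classic : set R) by exact: measurable_itv.
    have hm : lebesgue_measure (`[r0 - c, r0 + c]%classic : set R) = ((r0 + c) - (r0 - c))%:E.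
      by rewrite lebesgue_measure_itv /= lte_fin ifT ?EFinD //; lra.
    have h2 : (lebesgue_measure (S j) <= lebesgue_measure (`[(r0 - c)%R, (r0 + c)%R]%classic : set R))%E.
      exact: (le_measure lebesgue_measure (mem_set (mS j)) (mem_set mI) sub).
    apply: le_trans h2 _; rewrite hm.
    rewrite lee_fin; have -> : r0 + c - (r0 - c) = 2 * c by lra.
    rewrite le_eqVlt; apply/orP; left; apply/eqP; rewrite /c.
    by field; rewrite gt_eqF.
  rewrite /product_measure1; apply: le_lt_trans Tfin.
  rewrite ge0_integralTE; last by move=> x; exact: measure_ge0.
  apply: ge_ereal_sup => _ [h hle <-].
  rewrite -integralT_nnsfun.
  apply: le_trans (_ : (\int[mu]_x (cst T x) <= T)%E).
    apply: ge0_le_integral => //.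
    - by move=> x _; rewrite lee_fin; exact: nnsfun_ge0'.
    - by apply/measurable_EFinP; exact: measurable_funP.
    - by move=> x _; exact: le_trans (hle x) (sec x).
  rewrite integral_cst // le_eqVlt; apply/orP; left; apply/eqP.
  transitivity (T * 1)%E; last exact: mule1.
  congr (_ * _)%E; exact: probability_setT.
move=> p [Dp Hsup].
have rpos n : 0 < (iter n f p).2 := D_pos _ (Dp n).
have [M HM] := k_bdd.
have M0 : 0 <= M by exact: le_trans (normr_ge0 _) (HM 1 ltr01).
have unb : forall X, exists n, X < (iter n f p).2.
  move=> X; case: (pselect (exists n, X < (iter n f p).2)) => // /forallNP H.
  have : (limn_esup (fun n => ((iter n f p).2)%:E) <= X%:E)%E.
    by apply: esup_bounded => n; rewrite leNgt; apply/negP; exact: H.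
  by rewrite Hsup leye_eq.
have [j [[P1 P2] P3]] : exists j, ((eps j)^-1 * k (Wj j / (4 * delta)) < 2 /\
    W p < Wj j) /\ 4 * (M + C) < Wj j.
  have h1 : \forall t \near \oo, (eps t)^-1 * k (Wj t / (4 * delta)) < 2.
    by apply: (cvgr_lt 0 ek_lim).
  have h2 : \forall t \near \oo, W p < Wj t by apply: (cvgry_gt Wj_lim).
  have h3 : \forall t \near \oo, 4 * (M + C) < Wj t by apply: (cvgry_gt Wj_lim).
  have [j0 hj] := filter_ex (filterI (filterI h1 h2) h3).
  by exists j0; exact: hj.
have ej := eps_pos j.
have Pk : k (Wj j / (4 * delta)) < 2 * eps j.
  by move: P1; rewrite mulrC ltr_pdivrMr.
have exn : exists n, Wj j + eps j < W (iter n f p).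
  have [n Hn] := unb (1 + (Wj j + eps j + C) / beta).
  exists n.
  have hX : beta * ((Wj j + eps j + C) / beta) = Wj j + eps j + C.
    by rewrite mulrC divfK // gt_eqF.
  have hX0 : 0 <= (Wj j + eps j + C) / beta.
    by apply: divr_ge0; [have := Wj_pos j; lra | exact: ltW].
  have r1 : 1 <= (iter n f p).2 by lra.
  have := Wlow _ r1; nra.
case: (ex_minnP exn) => -[|m] Pn minn.
  by move: Pn; rewrite /= ; lra.
have notm : W (iter m f p) <= Wj j + eps j.
  by rewrite leNgt; apply/negP => /minn; rewrite ltnn.
set q := iter m f p in notm Pn.
have Wfq := W_f _ (Dp m).
rewrite iterS -/q in Pn.
have kM : k q.2 <= M by exact: le_trans (ler_norm _) (HM _ (rpos m)).
have q0 : 0 < q.2 := rpos m.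
have Wuq := Wup q q0.
have qbig : Wj j / (4 * delta) <= q.2.
  rewrite ler_pdivrMr; last by rewrite mulr_gt0.
  nra.
have kq : k q.2 <= k (Wj j / (4 * delta)).
  have w0 : 0 < Wj j / (4 * delta) by rewrite divr_gt0 // mulr_gt0.
  have m1 : Wj j / (4 * delta) \in `]0, +oo[ by rewrite in_itv /= andbT.
  have m2 : q.2 \in `]0, +oo[ by rewrite in_itv /= andbT.
  exact: k_decr.
exists m; exists j => //; split; first exact: q0.
rewrite ler_norml; apply/andP; split; lra.
Qed.
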